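(* Let $R\subseteq T$ be an integral extension of rings, let $Q\in\mathrm{Spec}(T)$ and $P=Q\cap R$. Assume that $R$ has a maximal subring $S$ which is integrally closed in $R$, with $(S:R)=P$ and $U(R/P)\not\subseteq S/P$. Then $T$ has a maximal subring $V$ which is integrally closed in $T$ with $(V:T)=Q$.
   Context: All rings are commutative with $1\neq0$ and subrings are unital. A maximal subring of a ring $A$ is a proper subring maximal with respect to inclusion among proper subrings of $A$. For a ring extension $S\subseteq R$, the conductor is $(S:R)=\{x\in R\mid Rx\subseteq S\}$. $U(A)$ denotes the unit group of $A$. *)

(* Defs.v *)
From HB Require Import structures.
From mathcomp Require Import all_boot all_order all_algebra.
Set Implicit Arguments. Unset Strict Implicit. Unset Printing Implicit Defensive.
Import GRing.Theory.
Local Open Scope ring_scope.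

(* Subsets of a commutative ring T are represented as Prop-valued predicates.
   A ring R (with ring extension R ⊆ T) is represented as a unital subring of T. *)

Section Defs.
Variable T : comNzRingType.

Definition subset (A B : T -> Prop) : Prop := forall x, A x -> B x.

Definition is_subring (A : T -> Prop) : Prop :=
  [/\ A 1, (forall x y, A x -> A y -> A (x - y)) & (forall x y, A x -> A y -> A (x * y))].

Definition subring_of (S R : T -> Prop) : Prop := is_subring S /\ subset S R.

Definition proper_in (S R : T -> Prop) : Prop := exists x, R x /\ ~ S x.

Definition maximal_subring (S R : T -> Prop) : Prop :=
  [/\ subring_of S R, proper_in S R &
      forall S' : T -> Prop, subring_of S' R -> subset S S' -> proper_in S' R ->
        subset S' S].

Definition integral_over (A : T -> Prop) (x : T) : Prop :=
  exists p : {poly T}, [/\ p \is monic, (forall i, A p`_i) & root p x].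

Definition integrally_closed_in (S R : T -> Prop) : Prop :=
  forall x, R x -> integral_over S x -> S x.

Definition integral_extension (R : T -> Prop) : Prop :=
  forall t : T, integral_over R t.

Definition conductor (S R : T -> Prop) (x : T) : Prop :=
  R x /\ forall r, R r -> S (r * x).

Definition prime_ideal (Q : T -> Prop) : Prop :=
  [/\ Q 0, (forall x y, Q x -> Q y -> Q (x + y)),
      (forall t x, Q x -> Q (t * x)), ~ Q 1 &
      (forall x y, Q (x * y) -> Q x \/ Q y)].

End Defs.

(* Main.v *)
Require Import Defs.
From HB Require Import structures.
From mathcomp Require Import all_boot all_order all_algebra.
From mathcomp Require Import boolp.
From mathcomp Require classical_sets.
From mathcomp Require Import ring.
From Stdlib Require Import Classical_Prop.
Import GRing.Theory.
Local Open Scope ring_scope.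
Set Implicit Arguments.
Section SubR.
Variables (T : comNzRingType) (A : T -> Prop) (hA : is_subring A).
Definition Ab : {pred T} := fun x => `[< A x >].
Lemma Ab_sub : subring_closed Ab.
Proof.
case: hA => h1 hB hM; split; rewrite /Ab.
- exact/asboolP.
- by move=> a b /asboolP ha /asboolP hb; apply/asboolP; apply: hB.
- by move=> a b /asboolP ha /asboolP hb; apply/asboolP; apply: hM.
Qed.
HB.instance Definition _ := GRing.isSubringClosed.Build T Ab Ab_sub.
Record subT := SubT { sval : T; _ : Ab sval }.
HB.instance Definition _ := [isSub for sval].
HB.instance Definition _ := [Choice of subT by <:].
HB.instance Definition _ := [SubChoice_isSubComNzRing of subT by <:].
Definition vT : {rmorphism subT -> T} := val.
Lemma A_val (z : subT) : A (val z).
Proof. by case: z => z /= /asboolP. Qed.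
Lemma int_to (z : T) : integral_over A z -> integralOver vT z.
Proof.
case=> p [mp pA pz].
have hB i : Ab p`_i by apply/asboolP.
pose p' : {poly subT} := \poly_(i < size p) (SubT p`_i (hB i)).
have ep : map_poly vT p' = p.
  apply/polyP => i; rewrite coef_map coef_poly /=.
  case: ltnP => hi //=; last by rewrite nth_default.
have mp' : p' \is monic.
  apply/monicP; apply: val_inj; rewrite /= -[val _]/(vT _).
  by rewrite -lead_coef_map_inj ?ep ?(monicP mp) //; exact: val_inj.
by exists p' => //; rewrite ep.
Qed.
Lemma int_from (z : T) : integralOver vT z -> integral_over A z.
Proof.
case=> p mp pz; exists (map_poly vT p); split => //.
- exact: monic_map.
- by move=> i; rewrite coef_map; apply: A_val.
Qed.
Lemma integral_hornerA (p : {poly T}) t :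
  (forall i, A p`_i) -> integral_over A t -> integral_over A p.[t].
Proof.
move=> pA /int_to it; apply: int_from; apply: integral_horner => //.
apply/integral_poly => i.
have hB : Ab p`_i by apply/asboolP.
by have -> : p`_i = vT (SubT p`_i hB) by []; apply: integral_id.
Qed.
End SubR.

Section Gen.
Variable T : comNzRingType.
Implicit Types A : T -> Prop.

Lemma sr0 A : is_subring A -> A 0.
Proof. by case=> h1 hB _; rewrite -(subrr 1); apply: hB. Qed.
Lemma srN A : is_subring A -> forall x, A x -> A (- x).
Proof. move=> hA x hx; have h0 := @sr0 A hA; rewrite -sub0r; case: hA => _ hB _; exact: hB. Qed.
Lemma srB A : is_subring A -> forall x y, A x -> A y -> A (x - y).
Proof. by case. Qed.
Lemma srM A : is_subring A -> forall x y, A x -> A y -> A (x * y).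
Proof. by case. Qed.
Lemma sr1 A : is_subring A -> A 1.
Proof. by case. Qed.
Lemma srD A : is_subring A -> forall x y, A x -> A y -> A (x + y).
Proof. move=> hA x y hx hy; rewrite -[y]opprK; apply: srB => //; exact: srN. Qed.
Lemma srX A : is_subring A -> forall x n, A x -> A (x ^+ n).
Proof.
move=> hA x n hx; elim: n => [|n IH]; first by rewrite expr0; exact: sr1.
by rewrite exprS; apply: srM.
Qed.
Lemma sr_sum A : is_subring A -> forall (I : Type) (r : seq I) (P : pred I) (F : I -> T),
  (forall i, P i -> A (F i)) -> A (\sum_(i <- r | P i) F i).
Proof.
move=> hA I r P F hF; apply: (big_ind A) => //; first exact: sr0.
exact: srD.
Qed.

Definition polyA A (p : {poly T}) := forall i, A p`_i.

Lemma polyA_C A c : is_subring A -> A c -> polyA A c%:P.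
Proof. by move=> hA hc i; rewrite coefC; case: eqP => // _; exact: sr0. Qed.
Lemma polyA_Xn A n : is_subring A -> polyA A 'X^n.
Proof.
move=> hA i; rewrite coefXn; case: eqP => _ /=; rewrite ?mulr1n ?mulr0n.
  exact: sr1.
exact: sr0.
Qed.
Lemma polyA_X A : is_subring A -> polyA A 'X.
Proof. by move=> hA; rewrite -['X]expr1; apply: polyA_Xn. Qed.
Lemma polyA_B A p q : is_subring A -> polyA A p -> polyA A q -> polyA A (p - q).
Proof. by move=> hA hp hq i; rewrite coefB; apply: srB. Qed.
Lemma polyA_D A p q : is_subring A -> polyA A p -> polyA A q -> polyA A (p + q).
Proof. by move=> hA hp hq i; rewrite coefD; apply: srD. Qed.
Lemma polyA_N A p : is_subring A -> polyA A p -> polyA A (- p).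
Proof. by move=> hA hp i; rewrite coefN; apply: srN. Qed.
Lemma polyA_Z A a p : is_subring A -> A a -> polyA A p -> polyA A (a *: p).
Proof. by move=> hA ha hp i; rewrite coefZ; apply: srM. Qed.
Lemma polyA_M A p q : is_subring A -> polyA A p -> polyA A q -> polyA A (p * q).
Proof.
move=> hA hp hq i; rewrite coefM; apply: sr_sum => // j _; exact: srM.
Qed.
Lemma polyA_sum A (I : Type) (r : seq I) (P : pred I) (F : I -> {poly T}) :
  is_subring A -> (forall i, P i -> polyA A (F i)) -> polyA A (\sum_(i <- r | P i) F i).
Proof.
move=> hA hF k; rewrite coef_sum; apply: sr_sum => // i Pi; exact: hF.
Qed.
Lemma polyA_horner A p t : is_subring A -> polyA A p -> A t -> A p.[t].
Proof.
move=> hA hp ht; rewrite horner_coef; apply: sr_sum => // i _.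
apply: srM => //; exact: srX.
Qed.
Lemma polyA_W A B p : (forall z, A z -> B z) -> polyA A p -> polyA B p.
Proof. by move=> hAB hp i; apply: hAB. Qed.

Definition adjr A t z := exists p, polyA A p /\ z = p.[t].

Lemma adjr_sub A t : is_subring A -> is_subring (adjr A t).
Proof.
move=> hA; split.
- by exists 1%:P; split; [apply: polyA_C => //; exact: sr1 | rewrite hornerC].
- move=> _ _ [p [hp ->]] [q [hq ->]]; exists (p - q); split; first exact: polyA_B.
  by rewrite hornerD hornerN.
- move=> _ _ [p [hp ->]] [q [hq ->]]; exists (p * q); split; first exact: polyA_M.
  by rewrite hornerM.
Qed.
Lemma adjr_A A t z : is_subring A -> A z -> adjr A t z.
Proof. by move=> hA hz; exists z%:P; split; [exact: polyA_C | rewrite hornerC]. Qed.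
Lemma adjr_t A t : is_subring A -> adjr A t t.
Proof. by move=> hA; exists 'X; split; [exact: polyA_X | rewrite hornerX]. Qed.
Lemma adjr_min A t W : is_subring W -> (forall z, A z -> W z) -> W t ->
  forall z, adjr A t z -> W z.
Proof.
move=> hW hAW hWt _ [p [hp ->]]; apply: polyA_horner => //.
exact: polyA_W hp.
Qed.

Lemma monic_int A (r : {poly T}) m z : is_subring A -> polyA A r -> (size r <= m)%N ->
  z ^+ m = r.[z] -> integral_over A z.
Proof.
move=> hA hr hs hz; exists ('X^m - r); split.
- have sz : size ('X^m - r) = m.+1.
    by rewrite size_addl ?size_polyXn ?size_opp // ltnS.
  rewrite monicE lead_coefE sz /= coefB coefXn eqxx.
  by move/leq_sizeP: hs => ->; rewrite // subr0.
- apply: polyA_B => //; exact: polyA_Xn.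
- by apply/rootP; rewrite hornerD hornerN hornerXn hz subrr.
Qed.

Section Ideal.
Variable Q : T -> Prop.
Hypothesis hQ : prime_ideal Q.
Lemma Q0 : Q 0. Proof. by case: hQ. Qed.
Lemma QD x y : Q x -> Q y -> Q (x + y). Proof. by case: hQ => _ h _ _ _; apply: h. Qed.
Lemma QMl t x : Q x -> Q (t * x). Proof. by case: hQ => _ _ h _ _; apply: h. Qed.
Lemma QMr t x : Q x -> Q (x * t). Proof. by rewrite mulrC; apply: QMl. Qed.
Lemma QN x : Q x -> Q (- x). Proof. by rewrite -mulN1r; apply: QMl. Qed.
Lemma QB x y : Q x -> Q y -> Q (x - y). Proof. by move=> hx hy; apply: QD => //; exact: QN. Qed.
Lemma Q1 : ~ Q 1. Proof. by case: hQ. Qed.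
Lemma Qprime x y : Q (x * y) -> Q x \/ Q y. Proof. by case: hQ => _ _ _ _ h; apply: h. Qed.
Lemma Q_sum (I : Type) (r : seq I) (P : pred I) (F : I -> T) :
  (forall i, P i -> Q (F i)) -> Q (\sum_(i <- r | P i) F i).
Proof. move=> hF; apply: (big_ind Q) => //; [exact: Q0 | exact: QD]. Qed.
Lemma Q_pow1 a i : Q (a - 1) -> Q (a ^+ i - 1).
Proof.
move=> ha; elim: i => [|i IH]; first by rewrite expr0 subrr; exact: Q0.
have -> : a ^+ i.+1 - 1 = a * (a ^+ i - 1) + (a - 1) by rewrite exprS; ring.
by apply: QD => //; apply: QMl.
Qed.
Lemma Qshift a b n i : Q (a * b - 1) -> (i <= n)%N -> Q (a ^+ n * b ^+ i - a ^+ (n - i)).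
Proof.
move=> hab hin.
have -> : a ^+ n * b ^+ i - a ^+ (n - i) = a ^+ (n - i) * ((a * b) ^+ i - 1).
  by rewrite exprMn -{1}(subnK hin) exprD; ring.
by apply: QMl; apply: Q_pow1.
Qed.
End Ideal.
End Gen.
Arguments adjr {T}.
Arguments polyA {T}.

Lemma horner_split (T : comNzRingType) (p : {poly T}) x :
  p.[x] = p`_0 + (drop_poly 1 p).[x] * x.
Proof.
rewrite -{1}(poly_take_drop 1 p) hornerD hornerM hornerXn expr1; congr (_ + _).
rewrite (horner_coef_wide _ (size_take_poly 1 p)) big_ord1 coef_take_poly /=.
by rewrite expr0 mulr1.
Qed.

Section Main.
Variables (T : comNzRingType) (R Q S : T -> Prop).
Hypotheses (hR : is_subring R) (hint : integral_extension R) (hQ : prime_ideal Q)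
 (hS : maximal_subring S R) (hSic : integrally_closed_in S R)
 (hcond : forall x, conductor S R x <-> (Q x /\ R x)).
Variables (u y : T).
Hypotheses (Ru : R u) (Ry : R y) (Quy : Q (u * y - 1))
  (nSQu : ~ (exists s, S s /\ (Q (u - s) /\ R (u - s)))).

Let hSs : is_subring S. Proof. by case: hS => [[]]. Qed.
Let SR z : S z -> R z. Proof. by case: hS => [[_ h]] _ _; apply: h. Qed.
Let Smax S' : subring_of S' R -> Defs.subset S S' -> proper_in S' R -> Defs.subset S' S.
Proof. by case: hS => _ _ h; apply: h. Qed.
Let PS z : Q z -> R z -> S z.
Proof. by move=> qz rz; case: (proj2 (hcond z) (conj qz rz)) => _ /(_ 1 (sr1 hR)); rewrite mul1r. Qed.
Let nSu : ~ S u.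
Proof.
move=> su; apply: nSQu; exists u; split => //; rewrite subrr; split; [exact: Q0 | exact: sr0].
Qed.

Definition B0 z := exists s, S s /\ Q (z - s).
Let B0_sub : is_subring B0.
Proof.
split.
- by exists 1; split; [exact: sr1 | rewrite subrr; exact: Q0].
- move=> a b [s1 [h1 q1]] [s2 [h2 q2]]; exists (s1 - s2); split; first exact: srB.
  have -> : a - b - (s1 - s2) = (a - s1) - (b - s2) by ring.
  exact: QB.
- move=> a b [s1 [h1 q1]] [s2 [h2 q2]]; exists (s1 * s2); split; first exact: srM.
  have -> : a * b - s1 * s2 = (a - s1) * b + s1 * (b - s2) by ring.
  by apply: QD => //; [apply: QMr | apply: QMl].
Qed.
Let SB0 z : S z -> B0 z.
Proof. by move=> sz; exists z; split => //; rewrite subrr; exact: Q0. Qed.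
Let QB0 z : Q z -> B0 z.
Proof. by move=> qz; exists 0; split; [exact: sr0 | rewrite subr0]. Qed.
Let nB0u : ~ B0 u.
Proof.
case=> s [ss qs]; apply: nSQu; exists s; split => //; split => //.
by apply: srB => //; apply: SR.
Qed.

Let Quy' : Q (y * u - 1). Proof. by rewrite mulrC. Qed.

Lemma step1 : B0 y.
Proof.
apply: NNPP => nB0y.
have nSy : ~ S y by move=> /SB0.
pose S' := adjr S y.
have hS' : subring_of S' R.
  split; first exact: (adjr_sub y hSs).
  move=> z; apply: adjr_min => //; exact: SR.
have SS' : Defs.subset S S' by move=> z; apply: adjr_A.
have allR : forall z, R z -> S' z.
  move=> z Rz; apply: NNPP => nz.
  have := Smax hS' SS' (ex_intro _ z (conj Rz nz)).
  by move/(_ y (adjr_t y hSs)).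
have [p [hp ep]] := allR u Ru.
set n := size p.
pose d := u ^+ n.+1 - \sum_(i < n) p`_i * u ^+ (n - i).
have Qd : Q d.
  have -> : d = \sum_(i < n) p`_i * (u ^+ n * y ^+ i - u ^+ (n - i)).
    rewrite /d exprSr {2}ep horner_coef mulr_sumr -sumrB.
    by apply: eq_bigr => i _; ring.
  apply: Q_sum => // i _; apply: QMl => //; apply: Qshift => //.
  exact: ltnW.
have Rd : R d.
  apply: srB => //; first exact: srX.
  apply: sr_sum => // i _; apply: srM => //; [apply/SR/hp | exact: srX].
have Sd : S d by apply: PS.
pose r := \sum_(i < n) p`_i *: 'X^(n - i) + d%:P.
have hr : polyA S r.
  apply: polyA_D => //; last exact: polyA_C.
  apply: polyA_sum => // i _; apply: polyA_Z => //; exact: polyA_Xn.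
have sr : (size r <= n.+1)%N.
  apply/leq_sizeP => j hj.
  rewrite coefD coefC coef_sum.
  have -> : (j == 0%N) = false by case: j hj.
  rewrite addr0; apply: big1 => i _; rewrite coefZ coefXn.
  have -> : (j == (n - i)%N) = false.
    apply/negbTE; apply: contraTneq hj => ->; rewrite -ltnNge ltnS; exact: leq_subr.
  by rewrite mulr0.
have hu : u ^+ n.+1 = r.[u].
  rewrite /r hornerD horner_sum hornerC /d.
  have -> : \sum_(i < n) (p`_i *: 'X^(n - i)).[u] = \sum_(i < n) p`_i * u ^+ (n - i).
    by apply: eq_bigr => i _; rewrite hornerZ hornerXn.
  by rewrite addrC subrK.
apply: nSu; apply: hSic => //; exact: monic_int hr sr hu.
Qed.

Definition Fam W := [/\ is_subring W, (forall z, B0 z -> W z) & ~ W u].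
Definition P' W := Fam W \/ (forall z, ~ W z).

Let Fam_nonempty W : P' W -> forall z, W z -> Fam W.
Proof. by case=> // h z /h. Qed.

Lemma exV : exists V, Fam V /\
  forall W, is_subring W -> (forall z, V z -> W z) -> (exists z, W z /\ ~ V z) -> W u.
Proof.
have := @classical_sets.Zorn_bigcup T P'.
case.
- move=> F FP Ftot.
  set U := classical_sets.bigcup F (fun X => X).
  have hU z : U z <-> exists2 X, F X & X z by [].
  case: (classic (exists z, U z)); last first.
    move=> nz; right => z Uz; apply: nz; by exists z.
  move=> [z0 /hU [X0 FX0 X0z0]].
  have F0 : Fam X0 by apply: (Fam_nonempty (FP _ FX0)) X0z0.
  have famF X z : F X -> X z -> Fam X by move=> FX; apply: (Fam_nonempty (FP _ FX)).
  left; split.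
  + split.
    * apply/hU; exists X0 => //; case: F0 => [[]] //.
    * move=> a b /hU [X1 FX1 X1a] /hU [X2 FX2 X2b].
      have f1 := famF _ _ FX1 X1a; have f2 := famF _ _ FX2 X2b.
      case: (Ftot _ _ FX1 FX2) => sub.
      - apply/hU; exists X2 => //; case: f2 => [[_ hB _]] _ _; apply: hB => //; exact: sub.
      - apply/hU; exists X1 => //; case: f1 => [[_ hB _]] _ _; apply: hB => //; exact: sub.
    * move=> a b /hU [X1 FX1 X1a] /hU [X2 FX2 X2b].
      have f1 := famF _ _ FX1 X1a; have f2 := famF _ _ FX2 X2b.
      case: (Ftot _ _ FX1 FX2) => sub.
      - apply/hU; exists X2 => //; case: f2 => [[_ _ hM]] _ _; apply: hM => //; exact: sub.
      - apply/hU; exists X1 => //; case: f1 => [[_ _ hM]] _ _; apply: hM => //; exact: sub.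
  + move=> z bz; apply/hU; exists X0 => //; case: F0 => _ h _; exact: h.
  + move=> /hU [X FX Xu]; have := famF _ _ FX Xu; case=> _ _; exact.
- move=> V [PV maxV].
  have FV : Fam V.
    case: PV => // hV; exfalso.
    apply: (maxV B0); last by left; split.
    split; first by move=> z /hV.
    move=> h; apply: (hV 1); apply: h; exists 1; split; [exact: sr1 | rewrite subrr; exact: Q0].
  exists V; split => // W hW VW [z [Wz nVz]].
  apply: NNPP => nWu; apply: (maxV W); last first.
    left; split => //; move=> t bt; apply: VW; case: FV => _ h _; exact: h.
  by split => // h; apply: nVz; apply: h.
Qed.

Section WithV.
Variable V : T -> Prop.
Hypothesis FV : Fam V.
Hypothesis MaxV : forall W, is_subring W -> (forall z, V z -> W z) ->
  (exists z, W z /\ ~ V z) -> W u.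

Let hV : is_subring V. Proof. by case: FV. Qed.
Let nVu : ~ V u. Proof. by case: FV. Qed.
Let VB0 z : B0 z -> V z. Proof. by case: FV => _ h _; apply: h. Qed.
Let VQ z : Q z -> V z. Proof. by move=> qz; apply: VB0; apply: QB0. Qed.
Let VS z : S z -> V z. Proof. by move=> sz; apply: VB0; apply: SB0. Qed.
Let Vy : V y. Proof. apply: VB0; exact: step1. Qed.
Let VQ' a b : Q (a - b) -> V b -> V a.
Proof. by move=> q vb; rewrite -(subrK b a); apply: srD => //; apply: VQ. Qed.

Lemma Gu : integral_over V u -> V u.
Proof.
case=> p [mp pV pu].
have sp : size p = (size p).-1.+1 by rewrite prednK // size_poly_gt0 monic_neq0.
set n := (size p).-1 in sp.
have pn : p`_n = 1 by move/monicP: mp; rewrite lead_coefE sp.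
have Qs : Q (\sum_(i < n.+1) p`_i * y ^+ (n - i)).
  have e0 : \sum_(i < n.+1) p`_i * (y ^+ n * u ^+ i) = 0.
    have -> : \sum_(i < n.+1) p`_i * (y ^+ n * u ^+ i) = (\sum_(i < n.+1) p`_i * u ^+ i) * y ^+ n.
      by rewrite mulr_suml; apply: eq_bigr => i _; ring.
    by rewrite -sp -horner_coef (rootP pu) mul0r.
  rewrite -[X in Q X]opprK -[X in Q (- X)]add0r -{1}e0 -sumrB.
  apply: QN => //; apply: Q_sum => // i _.
  rewrite -mulrBr; apply: QMl => //; apply: Qshift => //; rewrite -ltnS; exact: ltn_ord.
rewrite big_ord_recr /= subnn expr0 pn mulr1 in Qs.
pose v := \sum_(i < n) p`_i * y ^+ (n - i.+1).
have ev : \sum_(i < n) p`_(widen_ord (leqnSn n) i) * y ^+ (n - widen_ord (leqnSn n) i) = y * v.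
  rewrite /v mulr_sumr; apply: eq_bigr => i _ /=.
  by rewrite -(subnSK (ltn_ord i)) exprS; ring.
rewrite ev in Qs.
have Vv : V v by apply: sr_sum => // i _; apply: srM => //; exact: srX.
apply: (@VQ' u (- v)); last by apply: srN.
have -> : u - - v = u * (y * v + 1) - v * (u * y - 1) by ring.
by apply: QB => //; apply: QMl.
Qed.

Lemma R_adj z : R z -> adjr V u z.
Proof.
move=> Rz.
have hS' : subring_of (adjr S u) R.
  split; first exact: (adjr_sub u hSs).
  move=> w; apply: adjr_min => //; exact: SR.
have : adjr S u z.
  apply: NNPP => nz.
  have := Smax hS' (fun w hw => @adjr_A _ S u w hSs hw) (ex_intro _ z (conj Rz nz)).
  by move/(_ u (adjr_t u hSs)).
by case=> p [hp ->]; exists p; split => //; apply: polyA_W hp.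
Qed.

Lemma adj_good a : adjr V u a -> exists M, forall M', (M <= M')%N ->
  exists v, V v /\ Q (y ^+ M' * a - v).
Proof.
case=> g [hg ->]; exists (size g) => M' hM.
exists (\sum_(j < M') g`_j * y ^+ (M' - j)); split.
  by apply: sr_sum => // j _; apply: srM => //; exact: srX.
rewrite (horner_coef_wide _ hM) mulr_sumr -sumrB; apply: Q_sum => // j _.
have -> : y ^+ M' * (g`_j * u ^+ j) - g`_j * y ^+ (M' - j) =
   g`_j * (y ^+ M' * u ^+ j - y ^+ (M' - j)) by ring.
apply: QMl => //; apply: Qshift => //; exact: ltnW.
Qed.

Lemma all_adj t : adjr V u t.
Proof.
have [p [mp pR pt]] := hint t.
have sp : size p = (size p).-1.+1 by rewrite prednK // size_poly_gt0 monic_neq0.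
set n := (size p).-1 in sp.
have pn : p`_n = 1 by move/monicP: mp; rewrite lead_coefE sp.
have [M hM] : exists M, forall i, (i < n)%N -> exists v, V v /\ Q (y ^+ M * p`_i - v).
  suff : forall k, exists M, forall M', (M <= M')%N -> forall i, (i < k)%N ->
      exists v, V v /\ Q (y ^+ M' * p`_i - v).
    by case/(_ n) => M hM; exists M; apply: hM.
  elim=> [|k [M1 IH]]; first by exists 0%N.
  have [M2 h2] := adj_good (R_adj (pR k)).
  exists (maxn M1 M2) => M' hM' i; rewrite ltnS leq_eqVlt => /orP [/eqP -> |].
    by apply: h2; apply: leq_trans hM'; apply: leq_maxr.
  by apply: IH; apply: leq_trans hM'; apply: leq_maxl.
pose c i := y ^+ (M * (n - i)) * p`_i.
have Vc i : (i < n)%N -> V (c i).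
  move=> hi; have [v [Vv Qv]] := hM i hi.
  have -> : c i = y ^+ (M * (n - i.+1)) * (y ^+ M * p`_i).
    by rewrite /c -(subnSK hi) mulnS exprD; ring.
  apply: srM => //; first exact: srX.
  exact: VQ' Qv Vv.
pose w := y ^+ M * t.
have e0 : \sum_(i < n.+1) c i * w ^+ i = 0.
  have -> : \sum_(i < n.+1) c i * w ^+ i = (\sum_(i < n.+1) p`_i * t ^+ i) * y ^+ (M * n).
    rewrite mulr_suml; apply: eq_bigr => i _.
    rewrite /c /w exprMn -exprM.
    have -> : (M * n = M * (n - i) + M * i)%N.
      by rewrite -mulnDr subnK // -ltnS.
    by rewrite exprD; ring.
  by rewrite -sp -horner_coef (rootP pt) mul0r.
rewrite big_ord_recr /= in e0.
have cn : c n = 1 by rewrite /c subnn muln0 expr0 pn mulr1.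
pose r := \poly_(i < n) (- c i).
have hr : polyA V r.
  move=> i; rewrite coef_poly; case: ltnP => hi; last exact: sr0.
  by apply: srN => //; apply: Vc.
have wint : integral_over V w.
  apply: (@monic_int _ V r n) => //; first exact: size_poly.
  move/eqP: e0; rewrite cn mul1r addrC addr_eq0 => /eqP ->.
  rewrite horner_poly -sumrN; apply: eq_bigr => i _; by rewrite mulNr.
have Vw : V w.
  apply: NNPP => nVw.
  have := MaxV (adjr_sub w hV) (fun z hz => @adjr_A _ V w z hV hz)
     (ex_intro _ w (conj (adjr_t w hV) nVw)).
  case=> f [hf ef]; apply: nVu; apply: Gu.
  rewrite ef; exact: integral_hornerA.
have hA := adjr_sub u hV.
have -> : t = (t - u ^+ M * w) + u ^+ M * w by rewrite subrK.
apply: srD => //.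
  apply: adjr_A => //; apply: VQ.
  have -> : t - u ^+ M * w = - (((u * y) ^+ M - 1) * t) by rewrite /w exprMn; ring.
  apply: QN => //; apply: QMr => //; apply: Q_pow1 => //.
exists (w *: 'X^M); split; first by apply: polyA_Z => //; exact: polyA_Xn.
by rewrite hornerZ hornerXn mulrC.
Qed.


Lemma cond_Q x : (forall r, V (r * x)) -> Q x.
Proof.
move=> hx; apply: NNPP => nQx.
have E : forall n (p : {poly T}), (size p <= n)%N -> p \is monic -> polyA R p -> Q p.[x] ->
    exists p', [/\ polyA R p', Q p'.[x] & ~ Q p'`_0].
  elim=> [|n IH] p sp mp pR qp.
    by have := monic_neq0 mp; rewrite -size_poly_eq0 -leqn0 sp.
  case: (classic (Q p`_0)) => q0; last by exists p.
  set d := drop_poly 1 p.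
  have ep := horner_split p x.
  have qdx : Q (d.[x] * x).
    have -> : d.[x] * x = p.[x] - p`_0 by rewrite ep; ring.
    exact: QB.
  have qd : Q d.[x] by case: (Qprime hQ _ _ qdx).
  have s2 : (1 < size p)%N.
    rewrite ltnNge; apply/negP => s1.
    have sp1 : size p = 1%N.
      by apply/eqP; rewrite eqn_leq s1 size_poly_gt0 monic_neq0.
    by move/monicP: mp; rewrite lead_coefE sp1 /= => h; apply: (Q1 hQ); rewrite -h.
  apply: (IH d) => //.
  - by rewrite size_drop_poly leq_subLR add1n.
  - rewrite monicE lead_coefE size_drop_poly coef_drop_poly addn1 subn1 prednK.
      by move/monicP: mp; rewrite lead_coefE => ->.
    by rewrite -subn1 subn_gt0.
  - by move=> i; rewrite coef_drop_poly.
have [p [mp pR pt]] := hint x.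
have [p' [pR' qp' nq0]] := E _ p (leqnn _) mp pR (eq_ind _ Q (Q0 hQ) _ (esym (rootP pt))).
apply: nq0; apply: (proj1 (proj1 (hcond _) _)).
split; first exact: pR'.
move=> r Rr.
pose S' := fun z => R z /\ V z.
have hS' : subring_of S' R.
  split; last by move=> z [].
  split.
  - by split; apply: sr1.
  - by move=> a b [ra va] [rb vb]; split; apply: srB.
  - by move=> a b [ra va] [rb vb]; split; apply: srM.
have := Smax hS' (fun z sz => conj (SR sz) (VS sz)) (ex_intro _ u (conj Ru (fun h => nVu (proj2 h)))).
apply; split; first by apply: srM.
have -> : r * p'`_0 = r * p'.[x] - (r * (drop_poly 1 p').[x]) * x.
  by rewrite (horner_split p' x); ring.
apply: srB => //; apply: VQ; exact: QMl.
Qed.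

Lemma V_props : [/\ maximal_subring V (fun _ => True),
  integrally_closed_in V (fun _ => True) &
  forall x, conductor V (fun _ => True) x <-> Q x].
Proof.
split.
- split.
  + by split.
  + by exists u; split.
  + move=> W [hW _] VW [z [_ nWz]] t Wt; apply: NNPP => nVt.
    have Wu := MaxV hW VW (ex_intro _ t (conj Wt nVt)).
    by apply: nWz; apply: (adjr_min hW VW Wu (all_adj z)).
- move=> t _ it; apply: NNPP => nVt.
  have := MaxV (adjr_sub t hV) (fun z hz => @adjr_A _ V t z hV hz)
     (ex_intro _ t (conj (adjr_t t hV) nVt)).
  case=> f [hf ef]; apply: nVu; apply: Gu.
  rewrite ef; exact: integral_hornerA.
- move=> x; split.
  + by case=> _ h; apply: cond_Q => r; apply: h.
  + by move=> qx; split => // r _; apply: VQ; apply: QMl.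
Qed.

End WithV.

Lemma final : exists V, [/\ maximal_subring V (fun _ => True),
  integrally_closed_in V (fun _ => True) &
  forall x, conductor V (fun _ => True) x <-> Q x].
Proof. by have [V [FV MV]] := exV; exists V; apply: V_props. Qed.
End Main.

Unset Implicit Arguments.

Theorem theorem3p4 (T : comNzRingType) (R : T -> Prop) (Q : T -> Prop)
  (S : T -> Prop) :
  is_subring R ->
  integral_extension R ->
  prime_ideal Q ->
  let P := fun x => Q x /\ R x in
  maximal_subring S R ->
  integrally_closed_in S R ->
  (forall x, conductor S R x <-> P x) ->
  (* U(R/P) is not contained in S/P *)
  (exists x, [/\ R x, (exists y, R y /\ P (x * y - 1))
                 & ~ (exists s, S s /\ P (x - s))]) ->
  exists V : T -> Prop,
    [/\ maximal_subring V (fun _ => True),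
        integrally_closed_in V (fun _ => True) &
        forall x, conductor V (fun _ => True) x <-> Q x].
Proof.
move=> hR hint hQ P hS hSic hcond [x [Rx [y0 [Ry [Qxy _]]] nS]].
exact: (final hR hint hQ hS hSic hcond x y0 Rx Ry Qxy nS).
Qed.
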